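(* Suppose Assumptions A1 and A2 hold. Then for all $k_1,k_2\in\{0,1,2,\dots\}$: 1. For $i\in\mathcal{D}$: $$\mathbb{E}\{d_i(k_1)d_i(k_2)\}=\delta(k_1-k_2)\,\alpha_i^2p_i(1-p_i)\,\mathbb{E}\{u^2(k_1-i)\}.$$ 2. For $i_1\neq i_2$ in $\mathcal{D}$: $$\mathbb{E}\{d_{i_1}(k_1)d_{i_2}(k_2)\}=-\delta(k_1-i_1-k_2+i_2)\,\alpha_{i_1}\alpha_{i_2}p_{i_1}p_{i_2}\,\mathbb{E}\{u^2(k_1-i_1)\}.$$
   Context: Setting. Fix $\bar\tau\ge1$ and $\mathcal{D}=\{0,\dots,\bar\tau\}$. A networked feedback system has a SISO discrete-time LTI plant $P$ with strictly proper transfer function and a SISO LTI controller $K$ with proper transfer function. The system is at rest at time $0$, so $u(n)=0$ and $v(n)=0$ for $n<0$. The plant input is $v(k)+u_d(k)$, where $v$ is the external input, and $u=Ky$ with $y$ the plant output. The receiver output is $$u_d(k)=\sum_{i=0}^{\bar\tau}\alpha_i\delta(\tau_{k-i}-i)u(k-i),$$ with fixed real weights $\alpha_i$ and Kronecker delta $\delta$. Assumptions. - A1: $\{\tau_n\}$ is i.i.d. on $\mathcal{D}$ with $\Pr\{\tau_n=i\}=p_i$, $\sum_ip_i=1$. Here it is indexed by all integers; negative-index delays only multiply $u(n)=0$ and do not affect the system. - A2: $\{v(k)\}$ is independent of $\{\tau_n\}$. Definitions. $\omega(k,n)=\alpha_i[\delta(\tau_n-i)-p_i]$ if $k=n+i$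 with $i\in\mathcal{D}$, and $\omega(k,n)=0$ otherwise. Set $d_i(k)=\omega(k,k-i)\,u(k-i)$ for $i\in\mathcal{D}$. *)

(* Defs.v *)
From HB Require Import structures.
From mathcomp Require Import all_boot all_order all_algebra.
From mathcomp Require Import all_classical all_reals all_analysis.
Set Implicit Arguments. Unset Strict Implicit. Unset Printing Implicit Defensive.
Import Order.TTheory GRing.Theory Num.Theory.
Local Open Scope classical_set_scope.
Local Open Scope ring_scope.

(* SISO discrete-time LTI system with rational transfer function Num(z)/Den(z),
   with the system at rest (signals indexed by all integers, zero in the far
   past): the input/output relation is the difference equation
   Den(q) y = Num(q) w, q the forward shift, i.e. for every integer k
     sum_j Den_j y(k + j - n) = sum_j Num_j w(k + j - n),  n = deg Den. *)
Definition lti_io (R : ringType) (Num Den : {poly R}) (w y : int -> R) : Prop :=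
  forall k : int,
    \sum_(j < size Den) Den`_j * y (k + j%:Z - (size Den).-1%:Z) =
    \sum_(j < size Num) Num`_j * w (k + j%:Z - (size Den).-1%:Z).

Definition strictly_proper_tf (R : ringType) (Num Den : {poly R}) : Prop :=
  Den != 0 /\ (size Num < size Den)%N.
Definition proper_tf (R : ringType) (Num Den : {poly R}) : Prop :=
  Den != 0 /\ (size Num <= size Den)%N.

Definition receiver (R : ringType) (tb : nat) (alpha : 'I_tb.+1 -> R)
  (tau : int -> 'I_tb.+1) (u : int -> R) (k : int) : R :=
  \sum_(i < tb.+1) alpha i * (tau (k - i%:Z) == i)%:R * u (k - i%:Z).

(* omega(k,n) = alpha_i [delta(tau_n - i) - p_i] if k = n + i with i in D,
   and 0 otherwise (one sample path) *)
Definition omega (R : ringType) (tb : nat) (alpha p : 'I_tb.+1 -> R)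
  (tau : int -> 'I_tb.+1) (k n : int) : R :=
  match k - n with
  | Posz m => if (m <= tb)%N then
                alpha (inord m) * ((tau n == inord m)%:R - p (inord m))
              else 0
  | Negz _ => 0
  end.

Definition dsig (R : ringType) (T : Type) (tb : nat) (alpha p : 'I_tb.+1 -> R)
  (tau : int -> T -> 'I_tb.+1) (u : int -> T -> R) (i : 'I_tb.+1) (k : int)
  (w : T) : R :=
  omega alpha p (fun n => tau n w) k (k - i%:Z) * u (k - i%:Z) w.

Section Assumptions.
Context {d} {T : measurableType d} {R : realType} (P : probability T R).

(* A1: {tau_n}_{n in Z} i.i.d. on D with Pr{tau_n = i} = p_i:
   the events {tau_n = i} are measurable and for every finite set s of
   distinct indices and every choice f of values,
   Pr( /\_{n in s} tau_n = f n ) = prod_{n in s} p_(f n). *)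
Definition A1_iid (tb : nat) (tau : int -> T -> 'I_tb.+1)
  (p : 'I_tb.+1 -> R) : Prop :=
  (forall (n : int) (i : 'I_tb.+1), measurable [set w | tau n w = i]) /\
  (forall (s : seq int) (f : int -> 'I_tb.+1), uniq s ->
     P (\big[setI/setT]_(n <- s) [set w | tau n w = f n])
     = (\prod_(n <- s) p (f n))%:E).

(* A2: the process {v(k)} is independent of {tau_n}: the generating
   pi-systems (finite intersections of events {tau_n = i}, resp. of events
   {v(k) in B} with B Borel) are independent. *)
Definition A2_indep (tb : nat) (tau : int -> T -> 'I_tb.+1)
  (v : int -> T -> R) : Prop :=
  forall (s : seq int) (f : int -> 'I_tb.+1)
         (m : nat) (ks : 'I_m -> int) (Bs : 'I_m -> set R),
    (forall j, measurable (Bs j)) ->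
    let Atau := \big[setI/setT]_(n <- s) [set w | tau n w = f n] in
    let Av := \big[setI/setT]_(j < m) (v (ks j) @^-1` Bs j) in
    P (Atau `&` Av) = (P Atau * P Av)%E.

End Assumptions.

(* Main.v *)
Require Import Defs.
From HB Require Import structures.
From mathcomp Require Import all_boot all_order all_algebra.
From mathcomp Require Import all_classical all_reals all_analysis.
From mathcomp Require Import measurable_realfun.
From mathcomp Require Import zify ring lra.
Import Order.TTheory GRing.Theory Num.Theory.
Local Open Scope classical_set_scope.
Local Open Scope ring_scope.

Lemma bigIP (T : Type) (I : eqType) (r : seq I) (F : I -> set T) w :
  (\big[setI/setT]_(i <- r) F i) w <-> (forall i, i \in r -> F i w).
Proof.
elim: r => [|b r IH]; rewrite ?big_nil ?big_cons.
  by split => // _ i; rewrite in_nil.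
split.
  move=> [Fb /IH Hr] i; rewrite inE => /orP [/eqP -> //|]; exact: Hr.
move=> H; split; first by apply: H; rewrite mem_head.
by apply/IH => i ir; apply: H; rewrite inE ir orbT.
Qed.

Section ge0_integral_mrestr.
Local Open Scope ereal_scope.
Context d (T : measurableType d) (R : realType).
Variables (m : {measure set T -> \bar R}) (D : set T) (mD : measurable D).

Let integral_mrestr_indic E : measurable E ->
  \int[mrestr m mD]_x (\1_E x)%:E = \int[m]_(x in D) (\1_E x)%:E.
Proof. by move=> ?; rewrite !integral_indic// /mrestr setIT. Qed.

Import HBNNSimple.

Let integral_mrestr_nnsfun (h : {nnsfun T >-> R}) :
  \int[mrestr m mD]_x (h x)%:E = \int[m]_(x in D) (h x)%:E.
Proof.
under [LHS]eq_integral do rewrite fimfunE -fsumEFin//.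
rewrite [LHS]ge0_integral_fsum//; last 2 first.
  - by move=> r; exact/measurable_EFinP/measurableT_comp.
  - by move=> n x _; rewrite EFinM nnfun_muleindic_ge0.
under [RHS]eq_integral do rewrite fimfunE -fsumEFin//.
rewrite [RHS]ge0_integral_fsum//; last 2 first.
  - by move=> r; exact/measurable_EFinP/measurableT_comp.
  - by move=> n x _; rewrite EFinM nnfun_muleindic_ge0.
apply: eq_fsbigr => r _.
by rewrite !integralZl_indic_nnsfun// integral_mrestr_indic.
Qed.

Lemma ge0_integral_mrestr (f : T -> \bar R) (mf : measurable_fun setT f) :
    (forall x, 0 <= f x) ->
  \int[mrestr m mD]_x f x = \int[m]_(x in D) f x.
Proof.
move=> f0; pose f_ := nnsfun_approx measurableT mf.
transitivity (limn (fun n => \int[mrestr m mD]_x (f_ n x)%:E)).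
  rewrite -monotone_convergence//=.
  - apply: eq_integral => x /[!inE] xD; apply/esym/cvg_lim => //=.
    exact: cvg_nnsfun_approx.
  - by move=> n; exact/measurable_EFinP.
  - by move=> n x _; rewrite lee_fin.
  - by move=> x _ a b ab; rewrite lee_fin//; exact/lefP/nd_nnsfun_approx.
rewrite (_ : \int[m]_(x in D) _ =
    limn (fun n => \int[m]_(x in D) (f_ n x)%:E)); last first.
  rewrite -monotone_convergence//=.
  - apply: eq_integral => x /[!inE] xD; apply/esym/cvg_lim => //.
    exact: cvg_nnsfun_approx.
  - by move=> n; exact/measurable_EFinP/measurable_funTS.
  - by move=> n x _; rewrite lee_fin.
  - by move=> x _ a b ab; rewrite lee_fin//; exact/lefP/nd_nnsfun_approx.
by congr (limn _); apply/funext => n /=; rewrite integral_mrestr_nnsfun.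
Qed.
End ge0_integral_mrestr.

Section Gen.
Context (tb : nat) (R : realType) (d : measure_display) (T : measurableType d)
  (P : probability T R) (p : 'I_tb.+1 -> R)
  (tau : int -> T -> 'I_tb.+1) (v : int -> T -> R).
Hypothesis A1m : forall (n : int) (i : 'I_tb.+1), measurable [set w | tau n w = i].
Hypothesis A1p : forall (s : seq int) (f : int -> 'I_tb.+1), uniq s ->
     P (\big[setI/setT]_(n <- s) [set w | tau n w = f n])
     = (\prod_(n <- s) p (f n))%:E.
Hypothesis A2 : A2_indep P tau v.
Hypothesis mv : forall k, measurable_fun setT (v k).

Definition Atau (s : seq int) (f : int -> 'I_tb.+1) : set T :=
  \big[setI/setT]_(m <- s) [set w | tau m w = f m].
Definition Av (M : nat) (ks : 'I_M -> int) (Bs : 'I_M -> set R) : set T :=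
  \big[setI/setT]_(j < M) (v (ks j) @^-1` Bs j).
Arguments Av {M}.

Lemma AtauP s f w : Atau s f w <-> (forall m, m \in s -> tau m w = f m).
Proof. exact: bigIP. Qed.

Lemma AvP M (ks : 'I_M -> int) Bs w : Av ks Bs w <-> (forall j, Bs j (v (ks j) w)).
Proof.
rewrite /Av; split; first by move=> /bigIP H j; apply: H; rewrite mem_index_enum.
by move=> H; apply/bigIP => j _; apply: H.
Qed.

Definition Gn (n : int) : set (set T) := fun S => S = set0 \/
  exists s f M ks Bs, [/\ uniq s, n \notin s, (forall j : 'I_M, measurable (Bs j))
     & S = Atau s f `&` Av ks Bs].

Lemma Gn_setI n : setI_closed (Gn n).
Proof.
move=> A B [->|HA]; first by left; rewrite set0I.
move=> [->|HB]; first by left; rewrite setI0.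
move: HA HB => [s1 [f1 [M1 [ks1 [Bs1 [u1 n1 mB1 ->]]]]]].
move=> [s2 [f2 [M2 [ks2 [Bs2 [u2 n2 mB2 ->]]]]]].
have [conf|noconf] := pselect (exists m, [/\ m \in s1, m \in s2 & f1 m <> f2 m]).
  left; apply/seteqP; split => w //.
  move=> [[/AtauP h1 _] [/AtauP h2 _]]; case: conf => m [ms1 ms2 hne].
  by apply: hne; rewrite -h1 // -h2.
right; exists (undup (s1 ++ s2)), (fun m => if m \in s1 then f1 m else f2 m),
  (M1 + M2)%N, (fun j => match fintype.split j with inl a => ks1 a | inr b => ks2 b end),
  (fun j => match fintype.split j with inl a => Bs1 a | inr b => Bs2 b end).
split.
- exact: undup_uniq.
- by rewrite mem_undup mem_cat negb_or n1 n2.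
- by move=> j; case: (fintype.split j).
apply/seteqP; split => w.
  move=> [[/AtauP h1 /AvP g1] [/AtauP h2 /AvP g2]]; split.
    apply/AtauP => m; rewrite mem_undup mem_cat; case: ifP => ms1.
      by move=> _; exact: h1.
    by move=> /orP [|]; [move=> hm; rewrite hm in ms1|exact: h2].
  by apply/AvP => j; case: (fintype.split j).
move=> [/AtauP h /AvP g]; split; split.
- apply/AtauP => m ms1; have := h m; rewrite mem_undup mem_cat ms1 => /(_ isT).
  by [].
- by apply/AvP => j; move: (g (unsplit (inl j))); rewrite unsplitK.
- apply/AtauP => m ms2; have := h m; rewrite mem_undup mem_cat ms2 orbT => /(_ isT).
  case: ifP => // ms1 ->.
  case: (eqVneq (f1 m) (f2 m)) => // hne; exfalso; apply: noconf.
  by exists m; split => //; exact/eqP.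
- by apply/AvP => j; move: (g (unsplit (inr j))); rewrite unsplitK.
Qed.

Lemma Gn_meas n : Gn n `<=` measurable.
Proof.
move=> S [->|[s [f [M [ks [Bs [_ _ mB ->]]]]]]]; first exact: measurable0.
apply: measurableI; first by apply: bigsetI_measurable => m _; exact: A1m.
apply: bigsetI_measurable => j _; have := mv (ks j) measurableT _ (mB j); by rewrite setTI.

Qed.

Lemma GnT n : Gn n setT.
Proof.
right; exists [::], (fun _ => ord0), 0%N, (fun _ => 0), (fun _ => setT); split => //.
by rewrite /Atau /Av big_nil big_ord0 setIT.
Qed.

Lemma p_ge0 a : 0 <= p a.
Proof.
have := A1p [:: 0] (fun _ => a) isT; rewrite big_seq1 big_seq1 => h.
by rewrite -lee_fin -h measure_ge0.
Qed.

Definition T' (n : int) := g_sigma_algebraType (Gn n).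
Definition toT' (n : int) : T -> T' n := id.

Lemma mtoT' n : measurable_fun setT (toT' n).
Proof.
apply: (@measurability _ _ T (T' n) setT (toT' n) (Gn n) erefl).
move=> _ [S GS <-]; rewrite setTI; exact: (@Gn_meas n S GS).
Qed.

Lemma Gn_T'meas n S : Gn n S -> measurable (S : set (T' n)).
Proof. by move=> GS; apply: sub_sigma_algebra. Qed.

Section Fixed.
Variables (n : int) (a : 'I_tb.+1).
Let E := [set w | tau n w = a].
Let mE : measurable E := A1m n a.

Definition PT' := @measure_function_pushforward__canonical__measure_function_Measure
   _ _ T (T' n) R P (toT' n) (mtoT' n).
Definition mu1 := @measure_function_pushforward__canonical__measure_function_Measure
   _ _ T (T' n) R (mrestr P mE) (toT' n) (mtoT' n).
Definition mu2 := mscale (NngNum (p_ge0 a)) PT'.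

Lemma mu12G S : Gn n S -> mu1 S = mu2 S.
Proof.
rewrite /mu1 /mu2 /PT' /= /mscale /= /pushforward /mrestr /toT' preimage_id.
move=> [->|[s [f [M [ks [Bs [us ns mB ->]]]]]]].
  by rewrite set0I !measure0 mule0.
pose f' := fun m => if m == n then a else f m.
have -> : Atau s f `&` Av ks Bs `&` E = Atau (n :: s) f' `&` Av ks Bs.
  apply/seteqP; split => w.
    move=> [[/AtauP h1 h2] h3]; split => //; apply/AtauP => m.
    rewrite inE /f'; case: eqP => [-> //|_] /= ms; exact: h1.
  move=> [/AtauP h1 h2]; split; [split => //|].
    apply/AtauP => m ms; rewrite h1 ?inE ?ms ?orbT // /f'.
    by case: eqP => // mn; move: ns; rewrite -mn ms.
  by rewrite /E /=; rewrite h1 ?mem_head // /f' eqxx.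
have := A2 (n :: s) f' _ ks Bs mB; rewrite /= => ->.
have := A2 s f _ ks Bs mB; rewrite /= => ->.
rewrite -/(Atau _ _) -/(Av _ _) -/(Atau _ _).
rewrite /Atau A1p; last by rewrite /= ns us.
rewrite A1p // big_cons /f' eqxx EFinM -muleA; congr (_ * (_ * _))%E.
congr (_%:E); apply: eq_big_seq => m ms.
by case: eqP => // mn; move: ns; rewrite -mn ms.
Qed.

Lemma mu12 A : measurable A -> mu1 A = mu2 A.
Proof.
move=> mA.
have cov : \bigcup_k (fun _ : nat => (setT : set (T' n))) k = setT.
  by apply/seteqP; split => // x _; exists 0%N.
have fin : forall k : nat, (mu1 ((fun _ => setT) k) < +oo)%E.
  move=> _; rewrite /mu1 /= /pushforward /mrestr.
  apply: (le_lt_trans (probability_le1 _ _)); last exact: ltry.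
  by apply: measurableI => //; rewrite preimage_setT.
exact: (@measure_unique _ R (T' n) (Gn n) (fun _ => setT) erefl (@Gn_setI n)
  (fun _ => GnT n) cov mu1 mu2 mu12G fin A mA).
Qed.

Lemma F0 (f : T' n -> \bar R) : measurable_fun setT f -> (forall x, 0 <= f x)%E ->
  (\int[P]_w ((tau n w == a)%:R%:E * f w) = (p a)%:E * \int[P]_w f w)%E.
Proof.
move=> mf f0.
have mfT : measurable_fun (setT : set T) f.
  by have := measurableT_comp mf (mtoT' n).
transitivity (\int[P]_(w in E) f w)%E.
  rewrite [RHS]integral_mkcond; apply: eq_integral => w _.
  rewrite /patch; case: (eqVneq (tau n w) a) => h.
    by rewrite mul1e ifT //; exact: mem_set.
  rewrite mul0e ifF //; apply/negP => /set_mem /eqP.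
  by rewrite (negbTE h).
rewrite -ge0_integral_mrestr //.
transitivity (\int[mu1]_w f w)%E.
  by rewrite /mu1 ge0_integral_pushforward //; exact: mtoT'.
rewrite (eq_measure_integral mu2); last by move=> A mA _; exact: mu12.
rewrite ge0_integral_mscale //.
by rewrite /PT' ge0_integral_pushforward //; exact: mtoT'.
Qed.


Lemma Fs (Z : T -> R) : measurable_fun (setT : set (T' n)) (Z : T' n -> R) ->
  P.-integrable setT (fun w => (Z w)%:E) ->
  (\int[P]_w (((tau n w == a)%:R * Z w)%:E) = (p a)%:E * \int[P]_w (Z w)%:E)%E.
Proof.
move=> mZ iZ.
have mZE : measurable_fun (setT : set (T' n)) (fun w => (Z w)%:E).
  exact/measurable_EFinP.
rewrite [in LHS]integralE [in RHS]integralE.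
have hp : forall w, ((fun w => ((tau n w == a)%:R * Z w)%:E)^\+ w =
   ((tau n w == a)%:R)%:E * (fun w => (Z w)%:E)^\+ w)%E.
  move=> w; rewrite !funeposE; case: (tau n w == a) => /=.
    by rewrite mulr1n mul1r mul1e.
  by rewrite mulr0n mul0r mul0e maxxx.
have hn : forall w, ((fun w => ((tau n w == a)%:R * Z w)%:E)^\- w =
   ((tau n w == a)%:R)%:E * (fun w => (Z w)%:E)^\- w)%E.
  move=> w; rewrite !funenegE; case: (tau n w == a) => /=.
    by rewrite mulr1n mul1r mul1e.
  by rewrite mulr0n mul0r mul0e oppr0 maxxx.
under eq_integral do rewrite hp.
under [X in (_ - X)%E]eq_integral do rewrite hn.
rewrite F0; last 2 first.
- exact: measurable_funepos.
- by move=> x; exact: funepos_ge0.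
rewrite F0; last 2 first.
- exact: measurable_funeneg.
- by move=> x; exact: funeneg_ge0.
rewrite [in RHS]muleBr //.
exact: fin_num_adde_defr (integrable_pos_fin_num measurableT iZ).
Qed.

Lemma integrable_ind (Z : T -> R) (b : T -> bool) :
  measurable_fun setT (fun w => (b w)%:R * Z w) ->
  P.-integrable setT (fun w => (Z w)%:E) ->
  P.-integrable setT (fun w => ((b w)%:R * Z w)%:E).
Proof.
move=> mbZ iZ; apply: (le_integrable measurableT _ _ iZ).
  exact/measurable_EFinP.
move=> w _; rewrite !abse_EFin lee_fin normrM; case: (b w) => /=.
  by rewrite mulr1n normr1 mul1r.
by rewrite mulr0n normr0 mul0r.
Qed.

End Fixed.

Lemma mindT n a : measurable_fun (setT : set T) (fun w => ((tau n w == a)%:R : R)).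
Proof.
have -> : (fun w => ((tau n w == a)%:R : R)) = \1_[set w | tau n w = a].
  apply/funext => w; rewrite indicE; case: (eqVneq (tau n w) a) => h.
    by rewrite mem_set.
  by rewrite memNset //= => h'; rewrite h' eqxx in h.
exact: measurable_indic.
Qed.

Lemma measT'T n (Z : T -> R) : measurable_fun (setT : set (T' n)) (Z : T' n -> R) ->
  measurable_fun setT Z.
Proof. by move=> mZ; have := measurableT_comp mZ (mtoT' n). Qed.

Lemma Lcomb n (a1 a2 : 'I_tb.+1) (c1 c2 c0 : R) (Z : T -> R) :
  measurable_fun (setT : set (T' n)) (Z : T' n -> R) ->
  P.-integrable setT (fun w => (Z w)%:E) ->
  ('E_P[fun w => ((c1 * (tau n w == a1)%:R + c2 * (tau n w == a2)%:R + c0) * Z w)%R]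
  = ((c1 * p a1 + c2 * p a2 + c0))%:E * 'E_P[Z])%E.
Proof.
move=> mZ iZ; have mZT := @measT'T n Z mZ.
have i1 := integrableZl measurableT c1
  (@integrable_ind Z (fun w => tau n w == a1) (measurable_funM (mindT n a1) mZT) iZ).
have i2 := integrableZl measurableT c2
  (@integrable_ind Z (fun w => tau n w == a2) (measurable_funM (mindT n a2) mZT) iZ).
have i0 := integrableZl measurableT c0 iZ.
rewrite unlock /=.
transitivity (\int[P]_w ((c1%:E * ((tau n w == a1)%:R * Z w)%:E
   + c2%:E * ((tau n w == a2)%:R * Z w)%:E) + c0%:E * (Z w)%:E))%E.
  apply: eq_integral => w _; rewrite -!EFinM -!EFinD; congr (_%:E).
  by rewrite !mulrDl !mulrA.
rewrite integralD //; last exact: integrableD.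
rewrite integralD // !integralZl //; last 2 first.
- exact: (@integrable_ind Z (fun w => tau n w == a2) (measurable_funM (mindT n a2) mZT) iZ).
- exact: (@integrable_ind Z (fun w => tau n w == a1) (measurable_funM (mindT n a1) mZT) iZ).
rewrite !Fs //.
have := integrable_fin_num measurableT iZ.
case: (\int[P]_w (Z w)%:E)%E => // r _.
rewrite -!EFinM -!EFinD; congr (_%:E).
by rewrite !mulrDl !mulrA.
Qed.

Lemma meas_v n m : measurable_fun (setT : set (T' n)) (v m : T' n -> R).
Proof.
move=> _ B mB; apply: sub_sigma_algebra; right.
exists [::], (fun _ => ord0), 1%N, (fun _ => m), (fun _ => B); split => //.
by rewrite /Atau /Av big_nil big_ord1.
Qed.

Lemma meas_ind n m i : m != n ->
  measurable_fun (setT : set (T' n)) ((fun w => ((tau m w == i)%:R : R)) : T' n -> R).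
Proof.
move=> mn.
have -> : (fun w => ((tau m w == i)%:R : R)) = \1_[set w | tau m w = i].
  apply/funext => w; rewrite indicE; case: (eqVneq (tau m w) i) => h.
    by rewrite mem_set.
  by rewrite memNset //= => h'; rewrite h' eqxx in h.
apply: measurable_indic; apply: Gn_T'meas; right.
exists [:: m], (fun _ => i), 0%N, (fun _ => 0), (fun _ => setT); split => //.
- by rewrite inE eq_sym.
- by rewrite /Atau /Av big_seq1 big_ord0 setIT.
Qed.

Lemma solve_last (m dn : nat) (hm : m = dn.+1) (c g : nat -> R) rhs :
  c dn != 0 -> \sum_(j < m) c j * g j = rhs ->
  g dn = (c dn)^-1 * (rhs - \sum_(j < dn) c j * g j).
Proof.
move=> c0; subst m; rewrite big_ord_recr /= => <-.
by rewrite addrAC subrr add0r mulKf.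
Qed.

Lemma idx_lt (N j dd : nat) : (j < dd)%N -> N%:Z + j%:Z - dd%:Z < N%:Z.
Proof. lia. Qed.
Lemma idx_lt' (N j dd : nat) : (j < dd)%N -> N%:Z + j%:Z - dd%:Z <= N%:Z.
Proof. lia. Qed.
Lemma idx_le (N j dd : nat) : (j <= dd)%N -> N%:Z + j%:Z - dd%:Z <= N%:Z.
Proof. lia. Qed.

Lemma bound_aux (c x q a b : R) : (x = 0 \/ x = 1) ->
  `|c * (x - q) * (a * b)| <= `|c| * (1 + `|q|) * (a ^+ 2 + b ^+ 2).
Proof.
move=> hx.
have h1 : `|x - q| <= 1 + `|q|.
  apply: (le_trans (ler_normB x q)); rewrite lerD2r.
  by case: hx => ->; rewrite ?normr0 ?normr1.
have h2 : `|a * b| <= a ^+ 2 + b ^+ 2.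
  rewrite normrM -(real_normK (num_real a)) -(real_normK (num_real b)).
  have ha := normr_ge0 a; have hb := normr_ge0 b.
  nra.
rewrite !normrM; apply: ler_pM.
- by rewrite mulr_ge0.
- by rewrite mulr_ge0.
- by rewrite ler_wpM2l.
- by rewrite -normrM.
Qed.

Section System.
Variables (alpha : 'I_tb.+1 -> R) (NP DP NK DK : {poly R}) (u y : int -> T -> R).
Hypothesis sP : strictly_proper_tf NP DP.
Hypothesis sK : proper_tf NK DK.
Hypothesis hrest : forall (n : int) w, n < 0 -> u n w = 0 /\ v n w = 0 /\ y n w = 0.
Hypothesis hP : forall w, lti_io NP DP
       (fun k => v k w + receiver alpha (fun n => tau n w) (fun n => u n w) k)
       (fun k => y k w).
Hypothesis hK : forall w, lti_io NK DK (fun k => y k w) (fun k => u k w).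

Lemma meas_uy n : forall N : nat, forall k : int, k < N%:Z -> k <= n ->
  measurable_fun (setT : set (T' n)) (y k : T' n -> R) /\
  measurable_fun (setT : set (T' n)) (u k : T' n -> R).
Proof.
elim=> [|N IH] k hkN hkn.
  have hy : y k = fun _ => 0 by apply/funext => w; case: (hrest k w hkN) => _ [_ ->].
  have hu : u k = fun _ => 0 by apply/funext => w; case: (hrest k w hkN).
  by rewrite hy hu; split; exact: measurable_cst.
have [hlt|hge] := ltP k N%:Z; first exact: IH.
have -> : k = N%:Z by lia.
have hNn : N%:Z <= n by lia.
have IHy : forall m : int, m < N%:Z -> m <= n -> measurable_fun (setT : set (T' n)) (y m : T' n -> R).
  by move=> m h1 h2; case: (IH m h1 h2).
have IHu : forall m : int, m < N%:Z -> m <= n -> measurable_fun (setT : set (T' n)) (u m : T' n -> R).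
  by move=> m h1 h2; case: (IH m h1 h2).
have hW : forall m : int, m < N%:Z -> measurable_fun (setT : set (T' n))
    ((fun w => v m w + receiver alpha (fun n => tau n w) (fun n => u n w) m) : T' n -> R).
  move=> m hm; apply: measurable_funD; first exact: meas_v.
  rewrite /receiver; apply: measurable_sum => i.
  apply: measurable_funM; last by apply: IHu; lia.
  apply: measurable_funM; first exact: measurable_cst.
  by apply: meas_ind; apply/eqP; lia.
case: sP => DP0 sNP; case: sK => DK0 sNK.
have hszP : size DP = (size DP).-1.+1 by rewrite prednK // size_poly_gt0.
have hszK : size DK = (size DK).-1.+1 by rewrite prednK // size_poly_gt0.
have lP : DP`_(size DP).-1 != 0 by have := DP0; rewrite -lead_coef_eq0.
have lK : DK`_(size DK).-1 != 0 by have := DK0; rewrite -lead_coef_eq0.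
set dP := (size DP).-1 in hszP lP.
set dK := (size DK).-1 in hszK lK.
have yN : measurable_fun (setT : set (T' n)) (y N%:Z : T' n -> R).
  have -> : y N%:Z = fun w => (DP`_dP)^-1 *
     (\sum_(j < size NP) NP`_j * (v (N%:Z + j%:Z - dP%:Z) w +
        receiver alpha (fun n => tau n w) (fun n => u n w) (N%:Z + j%:Z - dP%:Z))
      - \sum_(j < dP) DP`_j * y (N%:Z + j%:Z - dP%:Z) w).
    apply/funext => w.
    have := @solve_last _ _ hszP (fun j => DP`_j) (fun j => y (N%:Z + j%:Z - dP%:Z) w) _ lP (hP w N%:Z).
    by rewrite /= addrK.
  apply: measurable_funM; first exact: measurable_cst.
  apply: measurable_funB; apply: measurable_sum => j.
    apply: measurable_funM; first exact: measurable_cst.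
    apply: hW; apply: idx_lt; apply: leq_trans (ltn_ord j) _.
    by rewrite -ltnS -hszP; exact: sNP.
  apply: measurable_funM; first exact: measurable_cst.
  apply: IHy; first exact: idx_lt (ltn_ord j).
  apply: (@le_trans _ _ N%:Z); [exact: idx_lt' (ltn_ord j)|exact: hNn].
have yle : forall m : int, m <= N%:Z -> measurable_fun (setT : set (T' n)) (y m : T' n -> R).
  move=> m hm; have [h|h] := ltP m N%:Z; first by apply: IHy; lia.
  by have -> : m = N%:Z by lia.
split => //.
have -> : u N%:Z = fun w => (DK`_dK)^-1 *
   (\sum_(j < size NK) NK`_j * y (N%:Z + j%:Z - dK%:Z) w
    - \sum_(j < dK) DK`_j * u (N%:Z + j%:Z - dK%:Z) w).
  apply/funext => w.
  have := @solve_last _ _ hszK (fun j => DK`_j) (fun j => u (N%:Z + j%:Z - dK%:Z) w) _ lK (hK w N%:Z).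
  by rewrite /= addrK.
apply: measurable_funM; first exact: measurable_cst.
apply: measurable_funB; apply: measurable_sum => j.
  apply: measurable_funM; first exact: measurable_cst.
  apply: yle; apply: idx_le; rewrite -ltnS -hszK.
  exact: leq_trans (ltn_ord j) sNK.
apply: measurable_funM; first exact: measurable_cst.
apply: IHu; first exact: idx_lt (ltn_ord j).
apply: (@le_trans _ _ N%:Z); [exact: idx_lt' (ltn_ord j)|exact: hNn].
Qed.

Lemma meas_u n k : k <= n -> measurable_fun (setT : set (T' n)) (u k : T' n -> R).
Proof.
move=> hkn; have [hk|hk] := ltP k 0.
  have hu : u k = fun _ => 0 by apply/funext => w; case: (hrest k w hk).
  by rewrite hu; exact: measurable_cst.
case: (@meas_uy n `|k|%N.+1 k _ hkn) => //; lia.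
Qed.

Hypothesis hu2 : forall k, P.-integrable setT (fun w => ((u k w) ^+ 2)%:E).

Lemma Cross (n1 n2 : int) (a1 a2 : 'I_tb.+1) (c1 c2 : R) : n1 != n2 ->
  ('E_P[fun w => ((c1 * ((tau n1 w == a1)%:R - p a1) * u n1 w) *
                  (c2 * ((tau n2 w == a2)%:R - p a2) * u n2 w))%R] = 0)%E.
Proof.
wlog hlt : n1 n2 a1 a2 c1 c2 / n1 < n2.
  move=> H hne; have [h|h|h] := ltgtP n1 n2.
  - exact: H.
  - have -> : (fun w => ((c1 * ((tau n1 w == a1)%:R - p a1) * u n1 w) *
                  (c2 * ((tau n2 w == a2)%:R - p a2) * u n2 w))%R) =
              (fun w => ((c2 * ((tau n2 w == a2)%:R - p a2) * u n2 w) *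
                  (c1 * ((tau n1 w == a1)%:R - p a1) * u n1 w))%R).
      by apply/funext => w; rewrite mulrC.
    by apply: H => //; rewrite eq_sym.
  - by rewrite h eqxx in hne.
move=> _.
pose Z := fun w => (c1 * ((tau n1 w == a1)%:R - p a1) * u n1 w * (c2 * u n2 w))%R.
have -> : (fun w => ((c1 * ((tau n1 w == a1)%:R - p a1) * u n1 w) *
                  (c2 * ((tau n2 w == a2)%:R - p a2) * u n2 w))%R) =
   (fun w => ((1 * (tau n2 w == a2)%:R + 0 * (tau n2 w == a2)%:R + - p a2) * Z w)%R).
  by apply/funext => w; rewrite /Z; ring.
have mZ : measurable_fun (setT : set (T' n2)) (Z : T' n2 -> R).
  apply: measurable_funM.
    apply: measurable_funM; last exact: meas_u (ltW hlt).
    apply: measurable_funM; first exact: measurable_cst.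
    apply: measurable_funB; last exact: measurable_cst.
    by apply: meas_ind; rewrite lt_eqF.
  apply: measurable_funM; first exact: measurable_cst.
  exact: meas_u.
set K := `|c1 * c2| * (1 + `|p a1|).
have ig : P.-integrable setT (fun w => (K * (u n1 w ^+ 2 + u n2 w ^+ 2))%:E).
  apply: (eq_integrable measurableT _ _ _
     (integrableZl measurableT K (integrableD measurableT (hu2 n1) (hu2 n2)))).
  by move=> w _; rewrite /= EFinM EFinD.
have iZ : P.-integrable setT (fun w => (Z w)%:E).
  apply: (le_integrable measurableT _ _ ig).
    exact/measurable_EFinP/(@measT'T n2 Z mZ).
  move=> w _; rewrite !abse_EFin lee_fin [X in _ <= X]ger0_norm; last first.
    by rewrite /K !mulr_ge0 // ?addr_ge0 // ?sqr_ge0.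
  have -> : Z w = (c1 * c2) * ((tau n1 w == a1)%:R - p a1) * (u n1 w * u n2 w).
    by rewrite /Z; ring.
  apply: bound_aux; case: (tau n1 w == a1); [right|left] => //.
rewrite Lcomb //.
by rewrite (_ : 1 * p a2 + 0 * p a2 + - p a2 = 0) ?mul0e //; ring.
Qed.

Lemma dsigE i (k : int) w : dsig alpha p tau u i k w =
  alpha i * ((tau (k - i%:Z) w == i)%:R - p i) * u (k - i%:Z) w.
Proof.
rewrite /dsig /omega.
have -> : k - (k - i%:Z) = Posz i by rewrite opprB addrCA subrr addr0.
by rewrite /= -ltnS ltn_ord inord_val.
Qed.

Lemma part1 (k1 k2 : nat) (i : 'I_tb.+1) :
  ('E_P[fun w => (dsig alpha p tau u i k1 w * dsig alpha p tau u i k2 w)%R]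
      = ((k1 == k2)%:R * alpha i ^+ 2 * p i * (1 - p i))%:E
        * 'E_P[fun w => (u (k1%:Z - i%:Z) w ^+ 2)%R])%E.
Proof.
have -> : (fun w => (dsig alpha p tau u i k1 w * dsig alpha p tau u i k2 w)%R) =
  (fun w => ((alpha i * ((tau (k1%:Z - i%:Z) w == i)%:R - p i) * u (k1%:Z - i%:Z) w) *
             (alpha i * ((tau (k2%:Z - i%:Z) w == i)%:R - p i) * u (k2%:Z - i%:Z) w))%R).
  by apply/funext => w; rewrite !dsigE.
case: (eqVneq k1 k2) => [<-|hne].
  set n := k1%:Z - i%:Z.
  have -> : (fun w => ((alpha i * ((tau n w == i)%:R - p i) * u n w) *
             (alpha i * ((tau n w == i)%:R - p i) * u n w))%R) =
    (fun w => (((alpha i ^+ 2 * (1 - 2 * p i)) * (tau n w == i)%:R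
                + 0 * (tau n w == i)%:R + alpha i ^+ 2 * p i ^+ 2) * (u n w ^+ 2))%R).
    by apply/funext => w; case: (tau n w == i) => /=; ring.
  rewrite Lcomb //; last by apply: measurable_funX; exact: meas_u.
  by congr ((_%:E * _)%E); rewrite mulr1n; ring.
rewrite Cross; last first.
  apply/eqP => h; move/eqP: hne; apply; lia.
by rewrite mulr0n !mul0r mul0e.
Qed.

Lemma part2 (k1 k2 : nat) (i1 i2 : 'I_tb.+1) : i1 != i2 ->
  ('E_P[fun w => (dsig alpha p tau u i1 k1 w * dsig alpha p tau u i2 k2 w)%R]
      = (- ((k1%:Z - i1%:Z == k2%:Z - i2%:Z)%:R
            * alpha i1 * alpha i2 * p i1 * p i2))%:E
        * 'E_P[fun w => (u (k1%:Z - i1%:Z) w ^+ 2)%R])%E.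
Proof.
move=> hi.
have -> : (fun w => (dsig alpha p tau u i1 k1 w * dsig alpha p tau u i2 k2 w)%R) =
  (fun w => ((alpha i1 * ((tau (k1%:Z - i1%:Z) w == i1)%:R - p i1) * u (k1%:Z - i1%:Z) w) *
             (alpha i2 * ((tau (k2%:Z - i2%:Z) w == i2)%:R - p i2) * u (k2%:Z - i2%:Z) w))%R).
  by apply/funext => w; rewrite !dsigE.
case: (eqVneq (k1%:Z - i1%:Z) (k2%:Z - i2%:Z)) => [heq|hne].
  rewrite -heq; set n := k1%:Z - i1%:Z.
  have -> : (fun w => ((alpha i1 * ((tau n w == i1)%:R - p i1) * u n w) *
             (alpha i2 * ((tau n w == i2)%:R - p i2) * u n w))%R) =
    (fun w => (((- (alpha i1 * alpha i2 * p i2)) * (tau n w == i1)%:R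
                + (- (alpha i1 * alpha i2 * p i1)) * (tau n w == i2)%:R
                + alpha i1 * alpha i2 * p i1 * p i2) * (u n w ^+ 2))%R).
    apply/funext => w; case: (eqVneq (tau n w) i1) => [e|ne].
      by rewrite e (negbTE hi) /=; ring.
    by case: (tau n w == i2) => /=; ring.
  rewrite Lcomb //; last by apply: measurable_funX; exact: meas_u.
  by congr ((_%:E * _)%E); rewrite mulr1n; ring.
rewrite Cross //.
by rewrite mulr0n !mul0r oppr0 mul0e.
Qed.

End System.

End Gen.


Theorem lemma3p4 (tb : nat) (htb : (1 <= tb)%N)
  (R : realType) (d : measure_display) (T : measurableType d)
  (P : probability T R)
  (alpha p : 'I_tb.+1 -> R)
  (NP DP NK DK : {poly R})
  (tau : int -> T -> 'I_tb.+1) (v u y : int -> T -> R) :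
  \sum_(i < tb.+1) p i = 1 ->
  strictly_proper_tf NP DP ->
  proper_tf NK DK ->
  (* system at rest at time 0 *)
  (forall (n : int) w, n < 0 -> u n w = 0 /\ v n w = 0 /\ y n w = 0) ->
  (* closed loop: y = P (v + u_d), u = K y, u_d the receiver output *)
  (forall w, lti_io NP DP
       (fun k => v k w + receiver alpha (fun n => tau n w) (fun n => u n w) k)
       (fun k => y k w)) ->
  (forall w, lti_io NK DK (fun k => y k w) (fun k => u k w)) ->
  (* v is a (real) random process, u has finite second moments *)
  (forall k, measurable_fun setT (v k)) ->
  (forall k, measurable_fun setT (u k)) ->
  (forall k, P.-integrable setT (fun w => ((u k w) ^+ 2)%:E)) ->
  A1_iid P tau p ->
  A2_indep P tau v ->
  forall k1 k2 : nat,
    (forall i : 'I_tb.+1,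
      'E_P[fun w => (dsig alpha p tau u i k1 w * dsig alpha p tau u i k2 w)%R]
      = ((k1 == k2)%:R * alpha i ^+ 2 * p i * (1 - p i))%:E
        * 'E_P[fun w => (u (k1%:Z - i%:Z) w ^+ 2)%R])%E
    /\
    (forall i1 i2 : 'I_tb.+1, i1 != i2 ->
      'E_P[fun w => (dsig alpha p tau u i1 k1 w * dsig alpha p tau u i2 k2 w)%R]
      = (- ((k1%:Z - i1%:Z == k2%:Z - i2%:Z)%:R
            * alpha i1 * alpha i2 * p i1 * p i2))%:E
        * 'E_P[fun w => (u (k1%:Z - i1%:Z) w ^+ 2)%R])%E.
Proof.
move=> hsum sP sK hrest hP hK mv mu hu2 [A1m A1p] A2 k1 k2.
split.
  move=> i.
  exact: (@part1 tb R d T P p tau v A1m A1p A2 mv alpha NP DP NK DK u y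
           sP sK hrest hP hK hu2 k1 k2 i).
move=> i1 i2 hi.
exact: (@part2 tb R d T P p tau v A1m A1p A2 mv alpha NP DP NK DK u y
         sP sK hrest hP hK hu2 k1 k2 i1 i2 hi).
Qed.
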